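(* Let $q=3^m$ with $m\ge1$ and $f(x)=x^{q+2}$ on $\mathbb{F}_{q^2}$. As $(a,b)$ runs through $\mathbb{F}_{q^2}\times\mathbb{F}_{q^2}^*$, the Walsh transform $W_f(a,b)$ takes the value $-q$ exactly $\frac{q^4-q^3-q^2+q}{3}$ times, the value $0$ exactly $\frac{q^4-q^3-q^2+q}{2}$ times, the value $q$ exactly $q^3-q$ times, and the value $2q$ exactly $\frac{q^4-q^3-q^2+q}{6}$ times.
   Context: For $f:\mathbb{F}_{q^2}\to\mathbb{F}_{q^2}$, the Walsh transform is $W_f(a,b)=\sum_{x\in\mathbb{F}_{q^2}}\xi_3^{\mathrm{Tr}_{\mathbb{F}_{q^2}/\mathbb{F}_3}(bf(x)-ax)}$, where $\xi_3=e^{2\pi i/3}$ and $\mathrm{Tr}_{\mathbb{F}_{q^2}/\mathbb{F}_3}$ is the absolute trace. *)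

(* Defs.v *)
From mathcomp Require Import all_boot all_order all_algebra all_field.
Set Implicit Arguments. Unset Strict Implicit. Unset Printing Implicit Defensive.
Import GRing.Theory Num.Theory.
Local Open Scope ring_scope.

Definition xi3 : algC := (-1 + 'i * sqrtC 3%:R) / 2%:R.

(* Absolute trace F_{3^n} -> F_3 (values lie in the prime subfield of F) *)
Definition absTr (F : finFieldType) (n : nat) (x : F) : F :=
  \sum_(i < n) x ^+ (3 ^ i)%N.

(* Canonical additive character of F_3, viewing y in {0,1,2} of the prime field *)
Definition psi3 (F : finFieldType) (y : F) : algC :=
  if y == 0 then 1 else if y == 1 then xi3 else if y == 2%:R then xi3 ^+ 2 else 0.

Definition walsh (F : finFieldType) (n : nat) (f : F -> F) (a b : F) : algC :=
  \sum_(x : F) psi3 (absTr n (b * f x - a * x)).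

(* Main.v *)
Require Import Defs.
From mathcomp Require Import all_boot all_order all_algebra all_field.
From mathcomp Require Import ring lra zify.
Import Order.TTheory GRing.Theory Num.Theory.
Local Open Scope ring_scope.

Lemma xi3_s : exists s : algC, xi3 = (-1 + s) / 2%:R /\ s ^+ 2 = - 3%:R.
Proof.
exists ('i * sqrtC 3%:R); split => //.
by rewrite exprMn sqrCi sqrtCK mulN1r.
Qed.

Lemma two_neq0C : (2%:R : algC) != 0. Proof. by rewrite pnatr_eq0. Qed.

Lemma xi3_cube : xi3 ^+ 3 = 1.
Proof.
have [s [-> hs]] := xi3_s; apply/eqP; rewrite -subr_eq0; apply/eqP.
have -> : ((-1 + s) / 2%:R) ^+ 3 - 1 = (s ^+ 2 + 3%:R) * (s - 3%:R) / 8%:R.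
  by field.
by rewrite hs addNr !mul0r.
Qed.

Lemma xi3_sum : 1 + xi3 + xi3 ^+ 2 = 0.
Proof.
have [s [-> hs]] := xi3_s.
have -> : 1 + (-1 + s) / 2%:R + ((-1 + s) / 2%:R) ^+ 2 = (s ^+ 2 + 3%:R) / 4%:R.
  by field.
by rewrite hs addNr mul0r.
Qed.

Lemma xi3_neq1 : xi3 != 1.
Proof.
apply/eqP => h; have := xi3_sum; rewrite h expr1n.
have e : (1 + 1 + 1 : algC) = 3%:R by rewrite -!natr1 add0r.
by rewrite e => /eqP; rewrite pnatr_eq0.
Qed.

Section Main.
Variable m : nat.
Variable F : finFieldType.
Hypothesis hm : (1 <= m)%N.
Hypothesis hF : #|F| = (3 ^ (2 * m))%N.

Local Notation q := (3 ^ m)%N.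
Local Notation n := (2 * m)%N.
Local Notation Tr := (@absTr F n).
Local Notation chi y := (psi3 (@absTr F n y)).

Lemma char3 : (3%N \in [pchar F]).
Proof. exact: (card_finPcharP hF). Qed.

Lemma three0 : (3%:R : F) = 0.
Proof. exact: (pcharf0 char3). Qed.

Lemma two_m1 : (2%:R : F) = -1.
Proof. by apply/eqP; rewrite -addr_eq0 natr1 three0. Qed.

Lemma two_neq0 : (2%:R : F) != 0.
Proof. by rewrite two_m1 oppr_eq0 oner_eq0. Qed.


Lemma xx_eq0 (x : F) : x + x = 0 -> x = 0.
Proof.
move=> h; apply/eqP; have /eqP : 2%:R * x = 0 by rewrite mulr_natl mulr2n.
by rewrite mulf_eq0 (negPf two_neq0).
Qed.


Lemma m1_neq1 : (-1 : F) != 1.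
Proof.
apply/eqP => h; have : (1:F) + 1 = 0 by rewrite -{1}h addNr.
by move/xx_eq0/eqP; rewrite oner_eq0.
Qed.

Lemma frobD k (x y : F) : (x + y) ^+ (3 ^ k) = x ^+ (3 ^ k) + y ^+ (3 ^ k).
Proof.
apply: exprDn_pchar; rewrite pnatX; apply/orP; left.
by rewrite pnatE //; exact: char3.
Qed.

Lemma frobN k (x : F) : (- x) ^+ (3 ^ k) = - x ^+ (3 ^ k).
Proof.
apply/eqP; rewrite -addr_eq0 addrC -frobD subrr expr0n.
by rewrite expn_eq0.
Qed.

Lemma q_gt1 : (1 < q)%N.
Proof. by rewrite -{1}(expn0 3) ltn_exp2l. Qed.

Lemma cardF : #|F| = (q * q)%N.
Proof. by rewrite hF mul2n -addnn expnD. Qed.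

Lemma expqq (x : F) : (x ^+ q) ^+ q = x.
Proof. by rewrite -exprM -cardF expf_card. Qed.

Lemma expqD (x y : F) : (x + y) ^+ q = x ^+ q + y ^+ q.
Proof. exact: frobD. Qed.
Lemma expqN (x : F) : (- x) ^+ q = - x ^+ q.
Proof. exact: frobN. Qed.
Lemma expqB (x y : F) : (x - y) ^+ q = x ^+ q - y ^+ q.
Proof. by rewrite expqD expqN. Qed.
Lemma expqM (x y : F) : (x * y) ^+ q = x ^+ q * y ^+ q.
Proof. exact: exprMn. Qed.

Lemma TrD (x y : F) : Tr (x + y) = Tr x + Tr y.
Proof. by rewrite /absTr -big_split; apply: eq_bigr => i _; rewrite frobD. Qed.

Lemma TrN (x : F) : Tr (- x) = - Tr x.
Proof. by rewrite /absTr -sumrN; apply: eq_bigr => i _; rewrite frobN. Qed.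

Lemma TrB (x y : F) : Tr (x - y) = Tr x - Tr y.
Proof. by rewrite TrD TrN. Qed.

Lemma Tr0 : Tr 0 = 0.
Proof. by rewrite /absTr big1 // => i _; rewrite expr0n expn_eq0. Qed.

Lemma Tr3 (x : F) : Tr (x ^+ 3) = Tr x.
Proof.
rewrite /absTr.
have hn : n = n.-1.+1 by rewrite prednK // muln_gt0.
rewrite hn big_ord_recr big_ord_recl /=.
have -> : x ^+ 3 ^+ (3 ^ n.-1) = x by rewrite -exprM -expnS -hn -hF expf_card.
rewrite expn0 expr1 addrC; congr (_ + _); apply: eq_bigr => i _.
by rewrite -exprM -expnS.
Qed.

Lemma Tr3k k (x : F) : Tr (x ^+ (3 ^ k)) = Tr x.
Proof.
elim: k => [|k IH]; first by rewrite expr1.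
by rewrite expnSr exprM Tr3 IH.
Qed.

Lemma Trq (x : F) : Tr (x ^+ q) = Tr x.
Proof. exact: Tr3k. Qed.

Lemma Tr_cube (x : F) : Tr x ^+ 3 = Tr x.
Proof.
have -> : Tr x ^+ 3 = pFrobenius_aut char3 (Tr x) by rewrite pFrobenius_autE.
rewrite /absTr rmorph_sum /= -[RHS](Tr3 x); apply: eq_bigr => i _.
by rewrite pFrobenius_autE -!exprM mulnC.
Qed.

Lemma Tr_vals (x : F) : [|| Tr x == 0, Tr x == 1 | Tr x == -1].
Proof.
have : Tr x * (Tr x - 1) * (Tr x + 1) == 0.
  have -> : Tr x * (Tr x - 1) * (Tr x + 1) = Tr x ^+ 3 - Tr x by ring.
  by rewrite Tr_cube subrr.
by rewrite !mulf_eq0 subr_eq0 addr_eq0 -orbA.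
Qed.


Lemma one_one : (1 + 1 : F) = -1.
Proof. by rewrite -two_m1. Qed.

Lemma m1_m1 : (-1 + -1 : F) = 1.
Proof. by rewrite -opprD one_one opprK. Qed.

Lemma m1_neq0 : (-1 : F) != 0.
Proof. by rewrite oppr_eq0 oner_eq0. Qed.

Lemma psi3_0 : psi3 (0 : F) = 1.
Proof. by rewrite /psi3 eqxx. Qed.
Lemma psi3_1 : psi3 (1 : F) = xi3.
Proof. by rewrite /psi3 oner_eq0 eqxx. Qed.
Lemma psi3_m1 : psi3 (-1 : F) = xi3 ^+ 2.
Proof. by rewrite /psi3 (negPf m1_neq0) (negPf m1_neq1) -two_m1 eqxx. Qed.

Lemma chiD (x y : F) : chi (x + y) = chi x * chi y.
Proof.
have x2 : xi3 * xi3 = xi3 ^+ 2 by rewrite expr2.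
have x3 : xi3 * xi3 ^+ 2 = 1 by rewrite -exprS xi3_cube.
have x3' : xi3 ^+ 2 * xi3 = 1 by rewrite mulrC x3.
have x4 : xi3 ^+ 2 * xi3 ^+ 2 = xi3 by rewrite -exprD (_ : (2 + 2 = 3 + 1)%N) // exprD xi3_cube mul1r.
rewrite TrD; case/or3P: (Tr_vals x) => /eqP->; case/or3P: (Tr_vals y) => /eqP->;
  rewrite ?addr0 ?add0r ?subrr ?addNr ?one_one ?m1_m1 ?psi3_0 ?psi3_1 ?psi3_m1
          ?mul1r ?mulr1 //.
Qed.

Lemma chi0 : chi (0 : F) = 1.
Proof. by rewrite Tr0 psi3_0. Qed.

Lemma chi_pair (y : F) : chi y + chi (- y) = if Tr y == 0 then 2%:R else -1.
Proof.
rewrite TrN; case/or3P: (Tr_vals y) => /eqP->.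
- by rewrite eqxx oppr0 psi3_0.
- rewrite oner_eq0 /= psi3_1 psi3_m1; apply/eqP; rewrite -addr_eq0 -xi3_sum.
  by apply/eqP; ring.
- rewrite (negPf m1_neq0) /= opprK psi3_1 psi3_m1; apply/eqP.
  by rewrite -addr_eq0 -xi3_sum; apply/eqP; ring.
Qed.

Definition K := [set x : F | x ^+ q == x].
Definition L := [set x : F | x ^+ q == - x].

Lemma inK x : (x \in K) = (x ^+ q == x). Proof. by rewrite inE. Qed.
Lemma inL x : (x \in L) = (x ^+ q == - x). Proof. by rewrite inE. Qed.

Lemma K0 : 0 \in K. Proof. by rewrite inK expr0n expn_eq0. Qed.
Lemma K1 : 1 \in K. Proof. by rewrite inK expr1n. Qed.
Lemma L0 : 0 \in L. Proof. by rewrite inL expr0n expn_eq0 oppr0. Qed.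
Lemma KD x y : x \in K -> y \in K -> x + y \in K.
Proof. by rewrite !inK expqD => /eqP-> /eqP->. Qed.
Lemma KN x : x \in K -> - x \in K.
Proof. by rewrite !inK expqN => /eqP->. Qed.
Lemma KB x y : x \in K -> y \in K -> x - y \in K.
Proof. by move=> hx hy; rewrite KD ?KN. Qed.
Lemma KM x y : x \in K -> y \in K -> x * y \in K.
Proof. by rewrite !inK expqM => /eqP-> /eqP->. Qed.
Lemma LD x y : x \in L -> y \in L -> x + y \in L.
Proof. by rewrite !inL expqD opprD => /eqP-> /eqP->. Qed.
Lemma LN x : x \in L -> - x \in L.
Proof. by rewrite !inL expqN => /eqP->. Qed.
Lemma LB x y : x \in L -> y \in L -> x - y \in L.
Proof. by move=> hx hy; rewrite LD ?LN. Qed.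
Lemma LLK x y : x \in L -> y \in L -> x * y \in K.
Proof. by rewrite !inL inK expqM => /eqP-> /eqP->; rewrite mulrNN. Qed.
Lemma KLL x y : x \in K -> y \in L -> x * y \in L.
Proof. by rewrite !inL inK expqM => /eqP-> /eqP->; rewrite mulrN. Qed.
Lemma LKL x y : x \in L -> y \in K -> x * y \in L.
Proof. by move=> hx hy; rewrite mulrC KLL. Qed.

Lemma Tr_L y : y \in L -> Tr y = 0.
Proof.
rewrite inL => /eqP hy; apply: xx_eq0.
by rewrite -{1}(Trq y) hy TrN addNr.
Qed.

Lemma KL0 x : x \in K -> x \in L -> x = 0.
Proof.
rewrite inK inL => /eqP hx; rewrite hx => /eqP h; apply: xx_eq0.
by rewrite {1}h addNr.
Qed.

Lemma decomp_uniq {u u' y y' : F} : u \in K -> u' \in K -> y \in L -> y' \in L ->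
  u + y = u' + y' -> u = u' /\ y = y'.
Proof.
move=> hu hu' hy hy' e.
have h0 : u - u' = 0.
  apply: KL0; first exact: KB.
  have -> : u - u' = y' - y.
    have -> : u = u' + y' - y by rewrite -e addrK.
    by ring.
  exact: LB.
have eu : u = u' by apply/eqP; rewrite -subr_eq0 h0.
by split => //; move: e; rewrite eu => /addrI.
Qed.

Lemma decompK (x : F) : - (x + x ^+ q) \in K.
Proof. by rewrite inK expqN expqD expqq addrC. Qed.
Lemma decompL (x : F) : x ^+ q - x \in L.
Proof. by rewrite inL expqB expqq opprB. Qed.
Lemma decompE (x : F) : - (x + x ^+ q) + (x ^+ q - x) = x.
Proof.
have e : - (x + x ^+ q) + (x ^+ q - x) - x = - (x * 3%:R).
  by rewrite -mulr_natr; ring.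
by apply/eqP; rewrite -subr_eq0 e three0 mulr0 oppr0.
Qed.

Lemma imKL : (fun p : F * F => p.1 + p.2) @: setX K L = [set: F].
Proof.
apply/setP => x; rewrite inE; apply/imsetP.
exists (- (x + x ^+ q), x ^+ q - x); last by rewrite decompE.
by rewrite inE /= decompK decompL.
Qed.

Lemma injKL : {in setX K L &, injective (fun p : F * F => p.1 + p.2)}.
Proof.
move=> [u y] [u' y']; rewrite !in_setX /= => /andP[hu hy] /andP[hu' hy'] e.
by have [-> ->] := decomp_uniq hu hu' hy hy' e.
Qed.

Lemma cardKL : (#|K| * #|L| = q * q)%N.
Proof. by rewrite -cardsX -(card_in_imset injKL) imKL cardsT cardF. Qed.

Lemma card_roots_lt (p : {poly F}) (A : {set F}) :
  p != 0 -> (forall x, x \in A -> root p x) -> (#|A| < size p)%N.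
Proof.
move=> p0 hA; rewrite cardE; apply: max_poly_roots => //; last exact: enum_uniq.
by apply/allP => x; rewrite mem_enum; exact: hA.
Qed.

Lemma cardK_le : (#|K| <= q)%N.
Proof.
have hs : size ('X^q - 'X : {poly F}) = q.+1.
  by rewrite size_polyDl ?size_polyXn // size_polyN size_polyX ltnS q_gt1.
rewrite -ltnS -hs; apply: card_roots_lt.
  by rewrite -size_poly_eq0 hs.
by move=> x; rewrite inK /root !hornerE subr_eq0.
Qed.

Lemma cardL_le : (#|L| <= q)%N.
Proof.
have hs : size ('X^q + 'X : {poly F}) = q.+1.
  by rewrite size_polyDl ?size_polyXn // size_polyX ltnS q_gt1.
rewrite -ltnS -hs; apply: card_roots_lt.
  by rewrite -size_poly_eq0 hs.
by move=> x; rewrite inL /root !hornerE addr_eq0.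
Qed.

Lemma cardK : #|K| = q.
Proof.
have := cardKL; have := cardK_le; have := cardL_le; have := q_gt1.
move: #|K| #|L| => a b; nia.
Qed.

Lemma cardL : #|L| = q.
Proof.
have := cardKL; have := cardK_le; have := cardL_le; have := q_gt1.
move: #|K| #|L| => a b; nia.
Qed.


Lemma sum_bij (R : Type) (idx : R) (op : Monoid.com_law idx) (A B : {set F})
  (h : F -> F) (g : F -> R) :
  {in A &, injective h} -> (forall x, x \in A -> h x \in B) -> #|A| = #|B| ->
  \big[op/idx]_(x in A) g (h x) = \big[op/idx]_(y in B) g y.
Proof.
move=> hi hAB hc; rewrite -(big_imset _ hi).
have -> : h @: A = B.
  apply/eqP; rewrite eqEcard (card_in_imset hi) hc leqnn andbT.
  by apply/subsetP => y /imsetP[x hx ->]; exact: hAB.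
by [].
Qed.

Lemma Tr_nonzero : exists y0 : F, Tr y0 != 0.
Proof.
case: (boolP [exists y : F, Tr y != 0]) => [/existsP //|/existsPn h].
exfalso.
pose P : {poly F} := \sum_(i < n) 'X^(3 ^ i).
have hP x : P.[x] = Tr x.
  by rewrite /P horner_sum; apply: eq_bigr => i _; rewrite hornerXn.
have hn : n = n.-1.+1 by rewrite prednK // muln_gt0.
have P0 : P != 0.
  apply/eqP => /(congr1 (fun p : {poly F} => p`_1)).
  rewrite coef0 /P coef_sum hn big_ord_recl /= coefXn expn0 eqxx.
  rewrite big1 ?addr0; first by move/eqP; rewrite oner_eq0.
  move=> i _; rewrite coefXn.
  suff : (1 < 3 ^ (bump 0 i))%N by case: (3 ^ _)%N => [|[|]].
  by rewrite -{1}(expn0 3) ltn_exp2l.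
have hs : (size P <= (3 ^ n.-1).+1)%N.
  apply: leq_trans (size_sum _ _ _) _; apply/bigmax_leqP => i _.
  by rewrite size_polyXn ltnS leq_exp2l // -ltnS -hn.
have := @card_roots_lt P [set: F] P0.
have hr : forall x, x \in [set: F] -> root P x.
  by move=> x _; rewrite /root hP; have := h x; rewrite negbK.
move/(_ hr); rewrite cardsT hF => hlt.
have : (3 ^ n <= 3 ^ n.-1)%N by move: hlt hs; lia.
by rewrite leqNgt ltn_exp2l // {2}hn ltnSn.
Qed.

Lemma Tr_one_K : exists2 z, z \in K & Tr z = 1.
Proof.
have [y0 hy0] := Tr_nonzero.
pose w := y0 + y0 ^+ q.
have wK : w \in K by rewrite inK expqD expqq addrC.
have Trw : Tr w = - Tr y0.
  rewrite TrD Trq; apply/eqP; rewrite -subr_eq0 opprK.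
  have -> : Tr y0 + Tr y0 + Tr y0 = Tr y0 * 3%:R by rewrite -mulr_natr; ring.
  by rewrite three0 mulr0.
case/or3P: (Tr_vals w) => /eqP hw.
- by move: hy0; rewrite -oppr_eq0 -Trw hw eqxx.
- by exists w.
- by exists (- w); [exact: KN | rewrite TrN hw opprK].
Qed.

Lemma SK0 : \sum_(u in K) chi u = 0.
Proof.
have [z zK Trz] := Tr_one_K.
have e : \sum_(u in K) chi u = \sum_(u in K) chi (u + z).
  symmetry; apply: (@sum_bij _ _ _ K K (fun u => u + z) (fun x => chi x)).
  - by move=> x y _ _ /addIr.
  - by move=> x hx; exact: KD.
  - by [].
have e2 : \sum_(u in K) chi u = xi3 * \sum_(u in K) chi u.
  rewrite {1}e mulr_sumr; apply: eq_bigr => u _.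
  by rewrite chiD Trz psi3_1 mulrC.
apply/eqP; have : (1 - xi3) * \sum_(u in K) chi u == 0.
  by rewrite mulrBl mul1r {1}e2 subrr.
by rewrite mulf_eq0 subr_eq0 eq_sym (negPf xi3_neq1).
Qed.

Lemma innerK w : w \in K ->
  \sum_(u in K) chi (u * w) = if w == 0 then q%:R else 0.
Proof.
move=> wK; case: eqP => [->|/eqP w0].
  under eq_bigr do rewrite mulr0 chi0.
  by rewrite sumr_const cardK.
rewrite /= -[RHS]SK0; apply: (@sum_bij _ _ _ K K (fun u => u * w) (fun x => chi x)).
- by move=> x y _ _ /(mulIf w0).
- by move=> x hx; exact: KM.
- by [].
Qed.


Lemma sum_KL (R : Type) (idx : R) (op : Monoid.com_law idx) (G : F -> R) :
  \big[op/idx]_x G x = \big[op/idx]_(u in K) \big[op/idx]_(y in L) G (u + y).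
Proof.
transitivity (\big[op/idx]_(x in [set: F]) G x); first by apply: eq_bigl => x; rewrite inE.
have := big_imset G injKL; rewrite imKL => ->.
rewrite pair_big_dep /=; apply: eq_bigl => -[a b]; by rewrite in_setX.
Qed.

Lemma pointwise c1 g u y : c1 \in K -> g \in L -> u \in K -> y \in L ->
  chi (1 * (u + y) ^+ (q + 2) - (c1 + g) * (u + y)) =
  chi (u * (1 - c1 - y * y)) * chi (- (g * y)).
Proof.
move=> c1K gL uK yL; rewrite -chiD; congr psi3.
have hu : u ^+ q = u by apply/eqP; rewrite -inK.
have hy : y ^+ q = - y by apply/eqP; rewrite -inL.
have eA : 1 * (u + y) ^+ (q + 2) - (c1 + g) * (u + y) =
          (u - y) * (u + y) ^+ 2 - (c1 + g) * (u + y).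
  by rewrite mul1r exprD expqD hu hy.
set l := u * u * y - y * y * y - c1 * y - g * u.
have lL : l \in L.
  rewrite /l; apply: LB; first apply: LB; first apply: LB.
  - by apply: KLL => //; apply: KM.
  - by apply: KLL => //; apply: LLK.
  - exact: KLL.
  - exact: LKL.
have eD : (u - y) * (u + y) ^+ 2 - (c1 + g) * (u + y) -
          (u * (1 - c1 - y * y) + - (g * y)) = (u ^+ 3 - u) + l.
  by rewrite /l; ring.
apply/eqP; rewrite -subr_eq0 -TrB eA eD TrD TrB Tr3 subrr add0r Tr_L //.
Qed.

Lemma S_formula e g : e \in K -> g \in L ->
  walsh n (fun x : F => x ^+ (q + 2)) ((1 - e) + g) 1 =
  q%:R * \sum_(y in L | y ^+ 2 == e) chi (- (g * y)).
Proof.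
move=> eK gL.
have c1K : 1 - e \in K by apply: KB => //; exact: K1.
rewrite /walsh sum_KL.
transitivity (\sum_(u in K) \sum_(y in L)
                 chi (u * (e - y * y)) * chi (- (g * y))).
  apply: eq_bigr => u uK; apply: eq_bigr => y yL.
  rewrite pointwise //; congr (chi (u * _) * _); ring.
rewrite exchange_big /= mulr_sumr big_mkcondr; apply: eq_bigr => y yL.
rewrite -mulr_suml innerK; last by apply: KB => //; exact: LLK.
rewrite subr_eq0 eq_sym expr2.
by case: (y * y == e); rewrite ?mul0r.
Qed.


Lemma sum_pm (R : Type) (idx : R) (op : Monoid.com_law idx) (s : F) (P : pred F)
  (G : F -> R) : s != 0 -> P =1 (fun y => (y == s) || (y == - s)) ->
  \big[op/idx]_(y | P y) G y = op (G s) (G (- s)).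
Proof.
move=> s0 hP.
have ns : - s != s.
  apply/eqP => h; move/eqP: s0; apply; apply: xx_eq0.
  by rewrite -{1}h addNr.
rewrite (bigD1 s) ?hP ?eqxx //; congr (op _ _).
apply: big_pred1 => y /=; rewrite hP.
case: (eqVneq y s) => [->|] /=; first by rewrite eq_sym (negPf ns).
by rewrite andbT.
Qed.

Lemma predY {s : F} : s \in L ->
  (fun y => (y \in L) && (y ^+ 2 == s ^+ 2)) =1 (fun y => (y == s) || (y == - s)).
Proof.
move=> sL y /=; rewrite eqf_sqr.
case: (eqVneq y s) => [->|_] /=; first by rewrite sL.
by case: (eqVneq y (- s)) => [->|_] /=; rewrite ?LN ?andbF.
Qed.

Definition E := [set y ^+ 2 | y in L :\ 0].

Lemma EK {e : F} : e \in E -> e \in K.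
Proof. by case/imsetP => y; rewrite in_setD1 => /andP[_ yL] ->; rewrite expr2 LLK. Qed.

Lemma E0 : 0 \notin E.
Proof.
apply/imsetP => -[y]; rewrite in_setD1 => /andP[y0 _] /eqP.
by rewrite eq_sym expf_eq0 (negPf y0) andbF.
Qed.

Local Notation W := (walsh n (fun x : F => x ^+ (q + 2))).

Lemma val0 g : g \in L -> W ((1 - 0) + g) 1 = q%:R.
Proof.
move=> gL; rewrite S_formula ?K0 //.
rewrite (big_pred1 0) ?mulr0 ?oppr0 ?chi0 ?mulr1 //.
move=> y /=; rewrite expf_eq0 /=.
by case: (eqVneq y 0) => [->|]; rewrite ?L0 ?andbF.
Qed.

Lemma valE s g : s \in L -> s != 0 -> g \in L ->
  W ((1 - s ^+ 2) + g) 1 = if Tr (g * s) == 0 then (2 * q)%:R else - q%:R.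
Proof.
move=> sL s0 gL.
rewrite S_formula //; last by rewrite expr2 LLK.
have -> : \sum_(y in L | y ^+ 2 == s ^+ 2) chi (- (g * y)) =
    chi (- (g * s)) + chi (- (g * - s)) by exact: (@sum_pm _ _ _ s _ _ s0 (predY sL)).
rewrite mulrN opprK addrC chi_pair.
by case: ifP => _; rewrite ?mulrN1 // natrM mulrC.
Qed.

Lemma valR e g : e \in K -> e != 0 -> e \notin E -> g \in L -> W ((1 - e) + g) 1 = 0.
Proof.
move=> eK e0 eE gL; rewrite S_formula // big_pred0 ?mulr0 // => y /=.
apply/negP => /andP[yL /eqP ye]; move/negP: eE; apply.
apply/imsetP; exists y => //; rewrite in_setD1 yL andbT.
by apply: contra e0 => /eqP y0; rewrite -ye y0 expr0n.
Qed.


Definition cnt (v : algC) := (\sum_(c : F) (W c 1%R == v))%N.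

Lemma cnt_split v :
  cnt v = (\sum_(e in K) \sum_(g in L) (W ((1 - e) + g)%R 1%R == v))%N.
Proof.
rewrite /cnt (@sum_KL _ _ addn) /=.
symmetry; apply: (@sum_bij _ _ _ K K (fun e => 1 - e)
   (fun u => \sum_(g in L) (W (u + g)%R 1%R == v))%N).
- by move=> x y _ _ /addrI /oppr_inj.
- by move=> x hx; apply: KB => //; exact: K1.
- by [].
Qed.

Lemma split_K (G : F -> nat) :
  (\sum_(e in K) G e = G 0%R + \sum_(e in E) G e +
      \sum_(e | (e \in K) && ((e != 0%R) && (e \notin E))) G e)%N.
Proof.
rewrite (bigD1 0%R) ?K0 //= (bigID (fun e => e \in E)) /= addnA; congr (_ + _ + _).
- apply: eq_bigl => e; case eE: (e \in E); rewrite ?andbT ?andbF //.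
  rewrite (EK eE) /=; apply/eqP => e0; move: E0; rewrite -e0 eE //.
- by apply: eq_bigl => e; rewrite andbA.
Qed.

Definition Rc := #|[set e | (e \in K) && ((e != 0) && (e \notin E))]|.

Lemma card_split : (q = 1 + #|E| + Rc)%N.
Proof.
have := split_K (fun _ => 1%N).
by rewrite sum1_card cardK sum1_card sum_nat_cond_const muln1.
Qed.

Lemma cardE2 : (q = 1 + #|E| * 2)%N.
Proof.
have h1 : #|L :\ 0| = (q - 1)%N.
  by have := cardsD1 0 L; rewrite L0 cardL => ->; rewrite addKn.
have h2 : #|L :\ 0| = (#|E| * 2)%N.
  rewrite -sum1_card (partition_big_imset (fun y : F => y ^+ 2)) /=.
  rewrite -/E -sum_nat_const; apply: eq_bigr => e /imsetP[s].
  rewrite in_setD1 => /andP[s0 sL] ->.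
  rewrite (@sum_pm _ _ _ s _ (fun _ => 1%N) s0) // => y /=.
  rewrite in_setD1 -andbA predY //.
  case: (eqVneq y s) => [->|_] /=; first by rewrite s0.
  case: (eqVneq y (- s)) => [->|_] /=; last by rewrite andbF.
  by rewrite oppr_eq0 s0.
have := q_gt1; lia.
Qed.

Definition cntT (t : F) := (\sum_(k in K) (Tr k == t))%N.

Lemma cntT_shift t : cntT (t + 1) = cntT t.
Proof.
have [z zK Trz] := Tr_one_K.
rewrite /cntT -(@sum_bij _ _ _ K K (fun k => k + z) (fun k => (Tr k == t + 1) : nat)).
- by apply: eq_bigr => k _; rewrite TrD Trz (inj_eq (addIr 1)).
- by move=> x y _ _ /addIr.
- by move=> x hx; exact: KD.
- by [].
Qed.

Definition k0 := cntT 0.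
Definition k0c := (\sum_(k in K) (Tr k != 0%R))%N.

Lemma k0c_eq : k0c = (2 * k0)%N.
Proof.
have e1 : cntT 1 = k0 by rewrite -(add0r 1) cntT_shift.
have e2 : cntT (-1) = k0 by rewrite -one_one cntT_shift e1.
transitivity (cntT 1%R + cntT (-1)%R)%N; last by rewrite e1 e2 mul2n addnn.
rewrite /k0c /cntT -big_split /=.
apply: eq_bigr => k _; case/or3P: (Tr_vals k) => /eqP->.
- by rewrite eqxx [0 == 1]eq_sym oner_eq0 [0 == -1]eq_sym (negPf m1_neq0).
- by rewrite oner_eq0 eqxx [1 == -1]eq_sym (negPf m1_neq1).
- by rewrite (negPf m1_neq0) (negPf m1_neq1) eqxx.
Qed.

Lemma k0_sum : (k0 + k0c = q)%N.
Proof.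
rewrite /k0 /cntT /k0c -big_split /= -cardK -sum1_card.
by apply: eq_bigr => k _; case: (Tr k == 0).
Qed.

Lemma k0_3 : (q = 3 * k0)%N.
Proof. by rewrite -k0_sum k0c_eq; lia. Qed.

Lemma sumL_mul (s : F) (H : F -> nat) : s \in L -> s != 0 ->
  (\sum_(g in L) H (g * s)%R = \sum_(k in K) H k)%N.
Proof.
move=> sL s0; apply: (@sum_bij _ _ _ L K (fun g => g * s) H).
- by move=> x y _ _ /(mulIf s0).
- by move=> x hx; exact: LLK.
- by rewrite cardL cardK.
Qed.

Lemma cnt_formula v :
  cnt v = (q * (q%:R == v) + #|E| * (k0 * ((2 * q)%:R == v) + k0c * ((- q%:R)%R == v))
           + Rc * (q * (0%R == v)))%N.
Proof.
rewrite cnt_split split_K; congr (_ + _ + _).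
- under eq_bigr => g gL do rewrite val0 //.
  by rewrite sum_nat_const cardL.
- rewrite -sum_nat_const; apply: eq_bigr => e /imsetP[s].
  rewrite in_setD1 => /andP[s0 sL] ->.
  transitivity (\sum_(g in L) ((Tr (g * s)%R == 0%R) * ((2 * q)%:R == v) +
                               (Tr (g * s)%R != 0%R) * ((- q%:R)%R == v)))%N.
    apply: eq_bigr => g gL; rewrite valE //.
    by case: (Tr (g * s) == 0); rewrite ?mul1n ?mul0n ?addn0.
  rewrite big_split /= -!big_distrl /=.
  rewrite (@sumL_mul s (fun k => (Tr k == 0%R) : nat)) //.
  by rewrite (@sumL_mul s (fun k => (Tr k != 0%R) : nat)).
- rewrite -sum_nat_cond_const; apply: eq_bigr => e /andP[eK /andP[e0 eE]].
  under eq_bigr => g gL do rewrite valR //.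
  by rewrite sum_nat_const cardL.
Qed.


Lemma z3_eq1 (z : F) : z ^+ 3 = 1 -> z = 1.
Proof.
move=> h; have : (z - 1) ^+ (3 ^ 1) = 0.
  by rewrite frobD frobN expr1n expn1 h subrr.
by move/eqP; rewrite expf_eq0 subr_eq0 => /andP[_ /eqP].
Qed.

Lemma pow_root1 (z : F) : z ^+ (q + 2) = 1 -> z = 1.
Proof.
move=> h.
have z0 : z != 0 by apply: contra_eqN h => /eqP->; rewrite expr0n addn2 eq_sym oner_eq0.
have hq : z ^+ (q * q - 1) = 1.
  apply: (mulIf z0); rewrite mul1r -exprSr subn1 prednK ?muln_gt0 ?expn_gt0 //.
  by rewrite -cardF expf_card.
have hq1 : z ^+ (q - 1) = 1.
  have e : ((q + 2) * (q - 1) = (q * q - 1) + (q - 1))%N.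
    have := q_gt1; move: q => Q hQ; nia.
  by have := congr1 (fun x => x ^+ (q - 1)) h; rewrite -exprM e exprD hq mul1r expr1n.
apply: z3_eq1; move: h.
have -> : (q + 2 = (q - 1) + 3)%N by have := q_gt1; lia.
by rewrite exprD hq1 mul1r.
Qed.

Lemma pow_inj : injective (fun x : F => x ^+ (q + 2)).
Proof.
move=> x y /= e.
case: (eqVneq y 0) => [y0|y0].
  by move: e; rewrite y0 expr0n addn2 /= => /eqP; rewrite expf_eq0 => /andP[_ /eqP].
have : (x / y) ^+ (q + 2) = 1 by rewrite exprMn exprVn e divff // expf_neq0.
by move/pow_root1 => h; rewrite -(divfK y0 x) h mul1r.
Qed.

Lemma count_ab v :
  #|[set ab : F * F | (ab.2 != 0) && (W ab.1 ab.2 == v)]| = ((q * q).-1 * cnt v)%N.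
Proof.
have -> : #|[set ab : F * F | (ab.2 != 0) && (W ab.1 ab.2 == v)]| =
     (\sum_(ab : F * F) ((ab.2 != 0%R) && (W ab.1 ab.2 == v)))%N.
  by rewrite -sum1_card big_mkcond /=; apply: eq_bigr => ab _; rewrite inE; case: (_ && _).
rewrite -(pair_bigA _ (fun a b => ((b != 0%R) && (W a b == v)) : nat)) /= exchange_big /=.
transitivity (\sum_(b : F) ((b != 0%R) * cnt v))%N.
  apply: eq_bigr => b _; case: (eqVneq b 0) => [->|b0] /=.
    by rewrite big1.
  rewrite mul1n.
  have : b^-1 \in codom (fun x : F => x ^+ (q + 2)) by exact: (injF_onto pow_inj (b^-1)).
  case/codomP => t ht.
  have t0 : t != 0.
    by apply/eqP => t0; have := invr_neq0 b0; rewrite ht t0 expr0n addn2 eqxx.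
  have Wab a : W a b = W (a * t) 1.
    rewrite /walsh (reindex_inj (mulfI t0)); apply: eq_bigr => x _ /=.
    by rewrite exprMn -ht mulrA mulfV // mul1r mulrA.
  under eq_bigr => a _ do rewrite Wab.
  by rewrite /cnt [RHS](reindex_inj (mulIf t0)).
rewrite -big_distrl /=; congr (_ * _)%N.
rewrite -cardF -(cardC1 (0 : F)) -sum1_card [RHS]big_mkcond /=.
by apply: eq_bigr => b _; rewrite inE; case: (b != 0).
Qed.


Lemma arithN : ((q ^ 4 - q ^ 3 - q ^ 2) + q = (q * q).-1 * (q * (q - 1)))%N.
Proof.
have h := q_gt1; move: q h => Q h.
have e4 : (Q ^ 4 = Q * Q * Q * Q)%N by rewrite !expnS expn0 muln1 !mulnA.
have e3 : (Q ^ 3 = Q * Q * Q)%N by rewrite !expnS expn0 muln1 !mulnA.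
have e2 : (Q ^ 2 = Q * Q)%N by rewrite !expnS expn0 muln1.
rewrite e4 e3 e2; nia.
Qed.

Lemma divE (N X d : nat) : (0 < d)%N -> N = (X * d)%N -> (N %/ d = X)%N.
Proof. by move=> d0 ->; rewrite mulnK. Qed.



Lemma fin (Q e r k kc : nat) 
  (hN : (Q ^ 4 - Q ^ 3 - Q ^ 2 + Q)%N = ((Q * Q).-1 * (Q * (Q - 1)))%N)
  (hE : Q = (1 + e * 2)%N) (hR : Q = (1 + e + r)%N) (hk : Q = (3 * k)%N)
  (hc : kc = (2 * k)%N) (hq : (1 < Q)%N) :
  [/\ ((Q * Q).-1 * (Q * 0 + e * (k * 0 + kc * 1) + r * (Q * 0)))%N =
      ((Q ^ 4 - Q ^ 3 - Q ^ 2 + Q) %/ 3)%N,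
      ((Q * Q).-1 * (Q * 0 + e * (k * 0 + kc * 0) + r * (Q * 1)))%N =
      ((Q ^ 4 - Q ^ 3 - Q ^ 2 + Q) %/ 2)%N,
      ((Q * Q).-1 * (Q * 1 + e * (k * 0 + kc * 0) + r * (Q * 0)))%N =
      (Q ^ 3 - Q)%N
    & ((Q * Q).-1 * (Q * 0 + e * (k * 1 + kc * 0) + r * (Q * 0)))%N =
      ((Q ^ 4 - Q ^ 3 - Q ^ 2 + Q) %/ 6)%N].
Proof.
subst kc.
have hQ1 : (Q - 1 = e * 2)%N by lia.
have hr : r = e by lia.
subst r; rewrite !muln0 !muln1 !addn0 !add0n hN hQ1.
have hP : (1 <= Q * Q)%N by rewrite muln_gt0 (ltnW hq).
set P := (Q * Q).-1.
have e3 : (Q ^ 3 = Q * Q * Q)%N by rewrite !expnS expn0 muln1 !mulnA.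
have eP : (P * Q = Q ^ 3 - Q)%N by rewrite e3 /P -subn1 mulnBl mul1n.
split.
- symmetry; apply: divE => //; rewrite {1}hk; ring.
- symmetry; apply: divE => //; ring.
- exact: eP.
- symmetry; apply: divE => //; rewrite {1}hk; ring.
Qed.

Lemma main_counts :
  [/\ #|[set ab : F * F | (ab.2 != 0) && (W ab.1 ab.2 == - (q%:R))]| =
        (((q ^ 4 - q ^ 3 - q ^ 2) + q) %/ 3)%N,
      #|[set ab : F * F | (ab.2 != 0) && (W ab.1 ab.2 == 0)]| =
        (((q ^ 4 - q ^ 3 - q ^ 2) + q) %/ 2)%N,
      #|[set ab : F * F | (ab.2 != 0) && (W ab.1 ab.2 == q%:R)]| = (q ^ 3 - q)%N
    & #|[set ab : F * F | (ab.2 != 0) && (W ab.1 ab.2 == (2 * q)%:R)]| =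
        (((q ^ 4 - q ^ 3 - q ^ 2) + q) %/ 6)%N].
Proof.
have Qp : (0 : algC) < q%:R by rewrite ltr0n expn_gt0.
have Q2p : (0 : algC) < (2 * q)%:R by rewrite ltr0n muln_gt0 expn_gt0.
have Qn : - (q%:R : algC) < 0 by rewrite oppr_lt0.
have Q2 : (q%:R : algC) < (2 * q)%:R by rewrite ltr_nat mul2n -addnn -addn1 leq_add2l expn_gt0.
have b1 : ((q%:R : algC) == - q%:R) = false by apply: gt_eqF; apply: lt_trans Qn Qp.
have b2 : (((2 * q)%:R : algC) == - q%:R) = false by apply: gt_eqF; apply: lt_trans Qn Q2p.
have b3 : ((0 : algC) == - q%:R) = false by apply: gt_eqF.
have b4 : ((q%:R : algC) == 0) = false by apply: gt_eqF.
have b5 : (((2 * q)%:R : algC) == 0) = false by apply: gt_eqF.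
have b6 : ((- q%:R : algC) == 0) = false by apply: lt_eqF.
have b7 : (((2 * q)%:R : algC) == q%:R) = false by apply: gt_eqF.
have b8 : ((- q%:R : algC) == q%:R) = false by apply: lt_eqF; apply: lt_trans Qn Qp.
have b9 : ((0 : algC) == q%:R) = false by apply: lt_eqF.
have b10 : ((q%:R : algC) == (2 * q)%:R) = false by apply: lt_eqF.
have b11 : ((- q%:R : algC) == (2 * q)%:R) = false by apply: lt_eqF; apply: lt_trans Qn Q2p.
have b12 : ((0 : algC) == (2 * q)%:R) = false by apply: lt_eqF.
have hN := arithN.
have hE := cardE2; have hR := card_split; have hk := k0_3; have hc := k0c_eq.
have hq := q_gt1.
rewrite !count_ab !cnt_formula !eqxx b1 b2 b3 b4 b5 b6 b7 b8 b9 b10 b11 b12 /=.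
move: (q) (#|E|) Rc k0 k0c hN hE hR hk hc hq => Q e r k kc hN hE hR hk hc hq.
exact: (fin _ _ _ _ _ hN hE hR hk hc hq).
Qed.

End Main.

Theorem theorem9 (m : nat) (F : finFieldType) (hm : (1 <= m)%N)
  (hF : #|F| = (3 ^ (2 * m))%N) :
  let q := (3 ^ m)%N in
  let f := fun x : F => x ^+ (q + 2) in
  let W := walsh (2 * m) f in
  let N := ((q ^ 4 - q ^ 3 - q ^ 2) + q)%N in
  [/\ #|[set ab : F * F | (ab.2 != 0) && (W ab.1 ab.2 == - (q%:R))]| = (N %/ 3)%N,
      #|[set ab : F * F | (ab.2 != 0) && (W ab.1 ab.2 == 0)]| = (N %/ 2)%N,
      #|[set ab : F * F | (ab.2 != 0) && (W ab.1 ab.2 == q%:R)]| = (q ^ 3 - q)%N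
    & #|[set ab : F * F | (ab.2 != 0) && (W ab.1 ab.2 == (2 * q)%:R)]| = (N %/ 6)%N].
Proof.
move=> q f W N.
exact: (@main_counts m F hm hF).
Qed.
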